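(* Consider the caching network and the cache-eavesdropper scenario $S_2$ described in the context, with a placement $\mathbf{m}=(m_1,\dots,m_N)$ of nonnegative integers filling the caches, i.e., $\sum_{j=1}^N m_j = nM$. If the network is secure in scenario $S_2$, then $M < N/S$.
   Context: A macro base station has access to a library of $N$ files $F_1,\dots,F_N$. There are $N_{\text{SBS}}$ small-cell base stations (SBSs), each with a cache of size $M$ files. Each file is split into $n$ fragments and encoded with a code such that any $n$ distinct encoded packets of a file suffice to recover it, while fewer than $n$ distinct packets do not allow recovery. A placement $\mathbf{m}$ means each SBS stores $m_j$ encoded packets of $F_j$, with packets stored at different SBSs all distinct. Each location is served by some number $d\in\{1,\dots,S\}$ of SBSs, where $S$ is the maximum number of SBSs serving a user and is attained at some location. Scenario $S_2$: an eavesdropper at a location served by $d$ SBSs has access to the cache contents of those $d$ SBSs, hence to $d m_j$ distinct packets of each file $F_j$. The network is secure in scenario $S_2$ if for every location of the eavesdropper it cannot recover any file. *)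

(* Defs.v *)
From mathcomp Require Import all_boot all_order all_algebra.
Set Implicit Arguments. Unset Strict Implicit. Unset Printing Implicit Defensive.

(* A file encoded into n fragments (MDS-type code) can be recovered from
   k distinct encoded packets iff n <= k. *)
Definition recoverable (n k : nat) : bool := n <= k.

(* Scenario S_2: an eavesdropper at location l, served by nserv l SBSs,
   obtains nserv l * m j distinct packets of file j. *)
Definition secure_S2 (L : Type) (nserv : L -> nat) (n N : nat)
  (m : 'I_N -> nat) : Prop :=
  forall (l : L) (j : 'I_N), ~~ recoverable n (nserv l * m j).

(* Main.v *)
Require Import Defs.
From mathcomp Require Import all_boot all_order all_algebra.
Import Order.TTheory GRing.Theory Num.Theory.

Theorem corollary3
  (N N_SBS M n S : nat) (L : Type) (nserv : L -> nat) (m : 'I_N -> nat) :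
  (0 < N)%N -> (0 < n)%N -> (1 <= S)%N -> (S <= N_SBS)%N ->
  (forall l : L, (1 <= nserv l <= S)%N) ->
  (exists l : L, nserv l = S) ->
  (\sum_(j < N) m j)%N = (n * M)%N ->
  secure_S2 nserv n m ->
  (M%:R < N%:R / S%:R :> rat)%R.
Proof.
move=> N0 n0 S1 _ _ [l hl] hsum hsec.
have hj : forall j : 'I_N, (S * m j < n)%N.
  move=> j; have := hsec l j; rewrite /recoverable -ltnNge hl; done.
have h1 : (S * (n * M) <= N * n.-1)%N.
  rewrite -hsum big_distrr /=.
  have -> : (N * n.-1 = \sum_(j < N) n.-1)%N by rewrite sum_nat_const card_ord.
  apply: leq_sum => j _; have := hj j; by case: n n0 {hsec hsum hj} => // n' _.
have h2 : (S * M < N)%N.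
  have h3 : (n * (S * M) < n * N)%N.
    rewrite mulnCA; apply: (leq_ltn_trans h1); rewrite [(n * N)%N]mulnC ltn_pmul2l //.
    by case: n n0 {h1 hj hsum hsec}.
  by rewrite ltn_pmul2l in h3.
have Sp : (0 < S%:R :> rat)%R by rewrite ltr0n.
rewrite ltr_pdivlMr // -natrM ltr_nat mulnC //.
Qed.
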